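(* Let $U(0)\geqslant 1$ and $d\geqslant 1$ be integers, $U(n)=U(0)+nd$, and let $S(n)=\overline{U(0)U(1)\cdots U(n)}$ (right-concatenation), so $S(0)=U(0)$. Let $n\geqslant 0$ and put $$l=\left\lceil \log_{10}(n d + S(0) + 1)\right\rceil,\qquad t_l=\left\lfloor \frac{10^{l-1}-S(0)}{d}\right\rfloor .$$ Assume $t_l\geqslant 0$ and $U(t_l+2)<10^l$. Let $s_0=S(t_l)$, $s_1=S(t_l+1)$, $s_2=S(t_l+2)$ and $$\alpha_l=-\frac{(10^l-1)\,U(t_l)+d\cdot 10^l}{(10^l-1)^2},\qquad \mu_l=-\frac{d}{10^l-1},\qquad \theta_l=\frac{s_2-2 s_1+s_0}{(10^l-1)^2}.$$ Then $$S(n)=\alpha_l+\mu_l\,(n-t_l)+\theta_l\, 10^{l(n-t_l)}.$$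
   Context: For positive integers $a_0,\ldots,a_k$, $\overline{a_0a_1\cdots a_k}$ denotes the integer whose decimal expansion is the decimal expansion of $a_0$ followed by that of $a_1$, ..., followed by that of $a_k$. Note $l$ is the number of decimal digits of $U(n)$. *)

(* Defs.v *)
From mathcomp Require Import all_boot all_order all_algebra.
Set Implicit Arguments. Unset Strict Implicit. Unset Printing Implicit Defensive.

Definition ndigits (b : nat) : nat := (trunc_log 10 b).+1.

Definition dconcat (a b : nat) : nat := a * 10 ^ ndigits b + b.

Definition U (U0 d n : nat) : nat := U0 + n * d.

Fixpoint Sc (U0 d n : nat) : nat :=
  match n with
  | 0 => U0
  | k.+1 => dconcat (Sc U0 d k) (U U0 d k.+1)
  end.

(* Main.v *)
Require Import Defs.
From mathcomp Require Import all_boot all_order all_algebra.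
From mathcomp Require Import zify ring lra.
Import Order.TTheory GRing.Theory Num.Theory.
Local Open Scope ring_scope.

Lemma step U0 d m k : (10 ^ k <= U U0 d m.+1 < 10 ^ k.+1)%N ->
  Sc U0 d m.+1 = (Sc U0 d m * 10 ^ k.+1 + U U0 d m.+1)%N.
Proof.
move=> H /=; rewrite /dconcat /ndigits (trunc_log_eq _ H) //.
Qed.

Lemma alg_base (L u d s0 : rat) : L - 1 != 0 ->
  let s1 := L * s0 + (u + d) in let s2 := L * s1 + (u + 2 * d) in
  s0 = - (((L - 1) * u + d * L) / (L - 1) ^+ 2) + (s2 - 2 * s1 + s0) / (L - 1) ^+ 2.
Proof. move=> H /=. field. exact: H. Qed.

Lemma alg_step (L u d th j : rat) : L - 1 != 0 ->
  - (((L - 1) * u + d * L) / (L - 1) ^+ 2) + - (d / (L - 1)) * (j + 1) + th * L ^+ 2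
  = L * (- (((L - 1) * u + d * L) / (L - 1) ^+ 2) + - (d / (L - 1)) * j + th * L) + (u + (j + 1) * d).
Proof. move=> H. field. exact: H. Qed.

Theorem theorem1 (U0 d n l tl : nat)
  (hU0 : (1 <= U0)%N) (hd : (1 <= d)%N)
  (hl : l = up_log 10 (n * d + U0 + 1))
  (htl : (tl%:Z = ((10 ^ (l - 1))%:Z - U0%:Z) %/ d%:Z)%Z)
  (hU : (U U0 d (tl + 2) < 10 ^ l)%N) :
  let s0 : rat := (Sc U0 d tl)%:R in
  let s1 : rat := (Sc U0 d (tl + 1))%:R in
  let s2 : rat := (Sc U0 d (tl + 2))%:R in
  let L : rat := (10 ^ l)%:R in
  let alpha : rat := - (((L - 1) * (U U0 d tl)%:R + d%:R * L) / (L - 1) ^+ 2) in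
  let mu : rat := - (d%:R / (L - 1)) in
  let theta : rat := (s2 - 2 * s1 + s0) / (L - 1) ^+ 2 in
  (Sc U0 d n)%:R = alpha + mu * (n%:R - tl%:R)
                  + theta * (10 : rat) ^ ((l%:Z) * (n%:Z - tl%:Z))%R.
Proof.
have l0 : (0 < l)%N by rewrite hl up_log_gt0; apply/andP; split => //; lia.
have [hl1 hl2] : (10 ^ l.-1 < n * d + U0 + 1 <= 10 ^ l)%N /\ True.
  by split => //; rewrite hl; apply: up_log_bounds => //; lia.
move: htl; rewrite subn1.
set x := ((10 ^ l.-1)%:Z - U0%:Z)%Z => htl.
have dz : (d%:Z != 0)%Z by rewrite eqz_nat; lia.
have := divz_eq x d%:Z; rewrite -htl -PoszM.
have := modz_ge0 x dz; have := ltz_pmod x (_ : (0 < d%:Z)%R); rewrite ltz_nat => /(_ hd).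
set r := (x %% d%:Z)%Z; rewrite /x; move: r => r h1 h2 h3.
remember (tl * d)%N as m eqn:Em.
have [hT1 hT2] : (U0 + m <= 10 ^ l.-1 < U0 + m + d)%N /\ True.
  split => //. lia.
have hn : (tl <= n)%N.
  by rewrite -(leq_pmul2r hd) -Em; lia.
have Umono a b : (a <= b)%N -> (U U0 d a <= U U0 d b)%N.
  by move=> ab; rewrite /U leq_add2l leq_mul2r ab orbT.
have Ulow j : (10 ^ l.-1 <= U U0 d (tl + j.+1))%N.
  rewrite /U mulnDl mulSn -Em; lia.
have Uhigh j : (j.+1 <= 2)%N || (tl + j.+1 <= n)%N -> (U U0 d (tl + j.+1) < 10 ^ l)%N.
  case/orP => h.
    by apply: leq_ltn_trans hU; apply: Umono; lia.
  apply: leq_ltn_trans (Umono _ _ h) _; rewrite /U; lia.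
have UE j : (U U0 d (tl + j))%:R = (U U0 d tl)%:R + j%:R * d%:R :> rat.
  by rewrite -natrM -natrD /U mulnDl addnA.
have stepR j : (j.+1 <= 2)%N || (tl + j.+1 <= n)%N ->
   (Sc U0 d (tl + j.+1))%:R = (10 ^ l)%:R * (Sc U0 d (tl + j))%:R
      + ((U U0 d tl)%:R + (j%:R + 1) * d%:R) :> rat.
  move=> h; rewrite addnS (@step _ _ _ l.-1); last first.
    by rewrite -addnS Ulow prednK // Uhigh.
  by rewrite prednK // natrD natrM mulrC -addnS UE -natr1.
set L := ((10 ^ l)%:R : rat).
set alpha := - (((L - 1) * (U U0 d tl)%:R + d%:R * L) / (L - 1) ^+ 2).
set mu := - (d%:R / (L - 1)).
set s0 := ((Sc U0 d tl)%:R : rat).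
set s1 := ((Sc U0 d (tl + 1))%:R : rat).
set s2 := ((Sc U0 d (tl + 2))%:R : rat).
set theta := (s2 - 2 * s1 + s0) / (L - 1) ^+ 2.
have L1 : L - 1 != 0.
  rewrite /L subr_eq0 pnatr_eq1 -(expn0 10) eqn_exp2l //; lia.
have claim j : (j <= maxn (n - tl) 2)%N ->
    (Sc U0 d (tl + j))%:R = alpha + mu * j%:R + theta * L ^+ j.
  elim: j => [|j IH] hj.
    rewrite addn0 expr0 mulr1 mulr0 addr0 /theta /s2 /s1 /s0 /alpha.
    have e1 := stepR 0%N isT. have e2 := stepR 1%N isT.
    rewrite e2 e1 addn0 /=.
    rewrite -/L.
    set u := (U U0 d tl)%:R; set s := (Sc U0 d tl)%:R.
    rewrite (_ : (0%:R + 1 : rat) = 1) ?add0r // (_ : (1%:R + 1 : rat) = 2) //.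
    field; exact: L1.
  rewrite stepR; last first.
    by apply/orP; case: (leqP j.+1 2) => h; [left|right; lia].
  rewrite IH; last lia.
  rewrite -/L exprS /alpha /mu -natr1.
  set P := theta * L ^+ j.
  rewrite (mulrCA theta) -/P.
  field; exact: L1.
have := claim (n - tl)%N (leq_maxl _ _).
rewrite subnKC // => ->.
have e : (l%:Z * (n%:Z - tl%:Z))%R = Posz (l * (n - tl)) by rewrite subzn // PoszM.
by rewrite e -exprnP exprM -natrX natrB // !natrX.
Qed.
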